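(* Let $r,s\in(0,1)$ satisfy \[s = 2r(1-r)\qquad\text{and}\qquad r = 3s(1-s)^2 + 3s^2(1-s).\] Then the number $\beta = 1/r - 1$ is not an algebraic integer.
   Context: An algebraic integer is a complex number that is a root of a monic polynomial with integer coefficients. *)

(* Defs.v *)
From mathcomp Require Export all_boot all_order all_algebra all_field.

(* Main.v *)
Require Import Defs.
From mathcomp Require Import all_boot all_order all_algebra all_field.
From mathcomp Require Import ring zify.
Import Order.TTheory GRing.Theory Num.Theory.
Local Open Scope ring_scope.

Definition p0 : {poly rat} := Poly [:: -1/5; 3/5; -3/5; 1].
Lemma ps : polyseq p0 = [:: -1/5; 3/5; -3/5; 1].
Proof. rewrite /p0 (PolyK (c:=0)) //=; by rewrite oner_eq0. Qed.
Lemma pm : p0 \is monic.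
Proof. by rewrite monicE lead_coefE ps. Qed.
Lemma sp : size p0 = 4%N. Proof. by rewrite ps. Qed.
Lemma hp (b : algC) : (map_poly ratr p0).[b] = b^+3 - 3/5 * b^+2 + 3/5*b - 1/5.
Proof.
rewrite horner_coef size_map_poly sp !big_ord_recl big_ord0 /= !coef_map ps /=.
rewrite !(fmorph_div, rmorphN, rmorph1, rmorph_nat) /bump /= ?addn0 ?add1n; ring.
Qed.

Lemma cube4 (k : int) : k * k * k <> 4.
Proof.
move=> h.
have h1 : 0 <= k * k by nia.
have [k0|k1] : k <= 0 \/ 1 <= k by lia.
  have : k * k * k <= 0 by nia.
  lia.
have [e|k2] : k = 1 \/ 2 <= k by lia.
  by subst k; move: h.
have : 4 <= k * k by nia.
nia.
Qed.

Lemma norat (x : rat) : ~ root (map_poly ratr p0) (ratr x : algC).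
Proof.
rewrite /root hp => /eqP Hy.
set y : algC := ratr x in Hy.
have y0 : y != 0.
  apply/eqP => y0.
  have : (1/5 : algC) = 0.
    have -> : (1/5:algC) = -(0^+3 - 3/5*0^+2 + 3/5*0 - 1/5) by ring.
    by rewrite -y0 Hy oppr0.
  by apply/eqP; rewrite mulf_neq0 ?oner_eq0 ?invr_eq0 ?pnatr_eq0.
set z := y^-1 - 1.
have z3 : z^+3 = 4.
  apply/eqP; rewrite -subr_eq0.
  have -> : z^+3 - 4 = -5 * (y^+3 - 3/5 * y^+2 + 3/5*y - 1/5) / y^+3.
    rewrite /z; field; exact: y0.
  by rewrite Hy mulr0 mul0r.
have Az : z \in Aint.
  apply: (@root_monic_Aint ('X^3 - 4%:P)).
  - by rewrite /root !hornerE z3 subrr.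
  - exact: monicXnsubC.
  - by rewrite polyOverXnsubC rpred_nat.
have Qz : z \in Crat by rewrite rpredB ?rpredV ?Crat_rat ?rpred1.
have /intrP [k Dk] := Cint_rat_Aint Qz Az.
move: z3; rewrite Dk -rmorphXn /= -[4]/(4%:~R) => /eqP; rewrite eqr_int => /eqP k3.
have : k * k * k = 4 by rewrite -k3 !exprS expr0 mulr1 mulrA.
exact: cube4.
Qed.

Lemma key (b : algC) : b^+3 - 3/5 * b^+2 + 3/5*b - 1/5 = 0 -> b \notin Aint.
Proof.
move=> H; apply/negP => Ab.
have [q [Dq mq] dv] := minCpolyP b.
have qp : q %| p0 by rewrite -dv /root hp H.
have pn0 : p0 != 0 by rewrite -size_poly_eq0 sp.
have le := dvdp_leq pn0 qp.
have sq : (1 < size q)%N by move: (size_minCpoly b); rewrite Dq size_map_poly.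
case: (ltnP (size q) (size p0)) => [lt|ge].
  have [x rx] := reducible_cubic_root (eq_leq sp) (introT andP (conj sq lt)) qp.
  by apply: (norat x); rewrite fmorph_root.
have /eqP eqs : size q == size p0 by rewrite eqn_leq le ge.
have : q %= p0 by rewrite -dvdp_size_eqp // eqs.
rewrite eqp_monic // ?pm // => /eqP Eq.
move: Ab; rewrite unfold_in => /polyOverP/(_ 0%N).
rewrite Dq Eq coef_map ps /= => /intrP [k].
rewrite !(fmorph_div, rmorphN, rmorph1, rmorph_nat) => Ek.
have : (-1 : algC) = (5 * k)%:~R.
  by rewrite intrM -Ek; field.
move=> h.
have h2 : ((-1:int)%:~R : algC) = (5*k)%:~R by rewrite -h rmorphN1.
move/eqP: h2; rewrite eqr_int => /eqP; lia.
Qed.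

Theorem mainTheorem2 (r s : algC) :
  0 < r < 1 -> 0 < s < 1 ->
  s = 2 * r * (1 - r) ->
  r = 3 * s * (1 - s) ^+ 2 + 3 * s ^+ 2 * (1 - s) ->
  (1 / r - 1) \notin Aint.
Proof.
move=> /andP [r0 _] _ Hs Hr.
have rn0 : r != 0 by rewrite gt_eqF.
have E0 : r * (6*(1-r)*(1-2*r+2*r^+2)) = r * 1.
  by rewrite mulr1 [RHS]Hr Hs; ring.
have E := mulfI rn0 E0.
apply: key.
have -> : (1 / r - 1) ^+ 3 - 3 / 5 * (1 / r - 1) ^+ 2 + 3 / 5 * (1 / r - 1) - 1 / 5
   = (6*(1-r)*(1-2*r+2*r^+2) - 1) / (5 * r^+3).
  by field; rewrite rn0 /=.
by rewrite E subrr mul0r.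
Qed.
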